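(* Let $f:\mathbb{N}\to[0,\infty)$ be weakly super-multiplicative with normal order $g:(0,\infty)\to(0,\infty)$, where $g$ is either non-decreasing or $\log$-uniformly continuous. Then for every $n\in\mathbb{N}$ and every $\epsilon>0$ there exist $\gamma$ with $0<\gamma\le\epsilon$ and $x_0>0$ such that for all real $x>x_0$, \[ g\big(n(1+\gamma)x\big)\;\ge\;(1-5\epsilon)\,f(n)\,g(x). \]
   Context: A function $f:\mathbb{N}\to[0,\infty)$ is weakly super-multiplicative if for all $n\in\mathbb{N}$ and all $\epsilon>0$ there exist $x_0>0$ and $\delta>0$ such that for all real $x>x_0$, $\#\{m\in\mathbb{N}\cap[x,(1+\epsilon)x]: f(nm)\ge(1-\epsilon)f(n)f(m)\}\ge\delta x$. A function $f:\mathbb{N}\to[0,\infty)$ has normal order $g$ if for every $\epsilon>0$ the set $\{n\in\mathbb{N}: |f(n)-g(n)|\ge\epsilon g(n)\}$ has upper (natural) density $0$. A function $g:(0,\infty)\to(0,\infty)$ is $\log$-uniformly continuous if for every $\epsilon>0$ there is $\delta>0$ such that for all $x,y>0$ with $|x/y-1|<\delta$ we have $|g(x)/g(y)-1|<\epsilon$. *)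

(* Defs.v *)
From Stdlib Require Import Reals Lra List.
Open Scope R_scope.

(* Convention: N = {1, 2, 3, ...}.  Functions N -> R are modelled as
   nat -> R, only their values at n >= 1 matter. *)

(* #{ m in N /\ [x, (1+eps) x] : P m } >= c :
   there are at least c (as a real) distinct such m. *)
Definition count_ge (lo hi : R) (P : nat -> Prop) (c : R) : Prop :=
  exists l : list nat, NoDup l /\
    (forall m, In m l -> (1 <= m)%nat /\ lo <= INR m <= hi /\ P m) /\
    c <= INR (length l).

Definition weakly_super_multiplicative (f : nat -> R) : Prop :=
  forall (n : nat) (eps : R), (1 <= n)%nat -> 0 < eps ->
    exists x0 delta : R, 0 < x0 /\ 0 < delta /\
      forall x : R, x > x0 ->
        count_ge x ((1 + eps) * x)
          (fun m => f (n * m)%nat >= (1 - eps) * f n * f m) (delta * x).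

(* #{ n in N, n <= N : P n } <= c : every finite duplicate-free list of
   such n has length at most c. *)
Definition count_le (N : nat) (P : nat -> Prop) (c : R) : Prop :=
  forall l : list nat, NoDup l ->
    (forall m, In m l -> (1 <= m <= N)%nat /\ P m) ->
    INR (length l) <= c.

Definition upper_density_zero (P : nat -> Prop) : Prop :=
  forall d : R, 0 < d -> exists N0 : nat, forall N : nat, (N0 <= N)%nat ->
    count_le N P (d * INR N).

Definition normal_order (f : nat -> R) (g : R -> R) : Prop :=
  forall eps : R, 0 < eps ->
    upper_density_zero (fun n => Rabs (f n - g (INR n)) >= eps * g (INR n)).

Definition nondecreasing_pos (g : R -> R) : Prop :=
  forall x y : R, 0 < x -> x <= y -> g x <= g y.

Definition log_uniformly_continuous (g : R -> R) : Prop :=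
  forall eps : R, 0 < eps -> exists delta : R, 0 < delta /\
    forall x y : R, 0 < x -> 0 < y -> Rabs (x / y - 1) < delta ->
      Rabs (g x / g y - 1) < eps.

(* Main.v *)
Require Import Defs.
From Stdlib Require Import Reals.
From Stdlib Require Import Lra Lia List ZArith Classical FinFun.
Open Scope R_scope.

Lemma split_list (P Q : nat -> Prop) (l : list nat) :
  NoDup l -> (forall m, In m l -> P m \/ Q m) ->
  exists l1 l2, NoDup l1 /\ NoDup l2 /\
    (forall m, In m l1 -> In m l /\ P m) /\
    (forall m, In m l2 -> In m l /\ Q m) /\
    (length l <= length l1 + length l2)%nat.
Proof.
  induction l as [|a l IH]; intros Hnd H.
  - exists nil, nil; simpl; repeat split; try apply NoDup_nil; try (intros m []); lia.
  - apply NoDup_cons_iff in Hnd as [Ha Hnd].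
    destruct IH as [l1 [l2 [H1 [H2 [H3 [H4 H5]]]]]]; auto.
    { intros m Hm; apply H; right; auto. }
    destruct (H a (or_introl eq_refl)) as [Pa|Qa].
    + exists (a :: l1), l2. split; [|split; [|split; [|split]]].
      * constructor; auto. intro Hin; apply Ha; apply H3; auto.
      * auto.
      * intros m [<-|Hm]; [split; [left|]; auto|].
        destruct (H3 m Hm); split; [right|]; auto.
      * intros m Hm; destruct (H4 m Hm); split; [right|]; auto.
      * simpl; lia.
    + exists l1, (a :: l2). split; [|split; [|split; [|split]]].
      * auto.
      * constructor; auto. intro Hin; apply Ha; apply H4; auto.
      * intros m Hm; destruct (H3 m Hm); split; [right|]; auto.
      * intros m [<-|Hm]; [split; [left|]; auto|].
        destruct (H4 m Hm); split; [right|]; auto.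
      * simpl; lia.
Qed.

Lemma nat_above (r : R) : 0 < r -> exists N : nat, r <= INR N /\ INR N <= r + 1.
Proof.
  intros Hr. destruct (archimed r) as [H1 H2].
  assert (Hp : (0 < up r)%Z) by (apply lt_0_IZR; lra).
  exists (Z.to_nat (up r)). rewrite INR_IZR_INZ, Z2Nat.id by lia. lra.
Qed.

Theorem mainTheorem2 (f : nat -> R) (g : R -> R)
  (hf_nonneg : forall n : nat, (1 <= n)%nat -> 0 <= f n)
  (hg_pos : forall x : R, 0 < x -> 0 < g x)
  (hf_wsm : weakly_super_multiplicative f)
  (hfg : normal_order f g)
  (hg : nondecreasing_pos g \/ log_uniformly_continuous g) :
  forall (n : nat) (eps : R), (1 <= n)%nat -> 0 < eps ->
    exists gamma x0 : R, 0 < gamma /\ gamma <= eps /\ 0 < x0 /\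
      forall x : R, x > x0 ->
        g (INR n * (1 + gamma) * x) >= (1 - 5 * eps) * f n * g x.
Proof.
  intros n eps Hn Heps.
  assert (Hnp : 0 < INR n) by (apply lt_0_INR; lia).
  pose proof (hf_nonneg n Hn) as Hfn.
  destruct (Rle_lt_dec 1 (5*eps)) as [Hbig|Hsmall].
  { exists eps, 1. split; [lra|split;[lra|split;[lra|]]]. intros x Hx.
    assert (0 < g (INR n*(1+eps)*x)) by (apply hg_pos; apply Rmult_lt_0_compat; [apply Rmult_lt_0_compat|]; lra).
    assert (0 < g x) by (apply hg_pos; lra).
    assert (0 <= f n * g x) by (apply Rmult_le_pos; lra).
    assert ((1 - 5*eps) * f n * g x = (1-5*eps) * (f n * g x)) by ring.
    nra. }
  assert (Hgam : exists gamma, 0 < gamma /\ gamma <= eps /\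
     forall u v, 0 < v -> v <= u -> u <= (1+gamma)*v -> g u >= (1-eps) * g v).
  { destruct hg as [Hnd|Hluc].
    - exists eps. split; [lra|split;[lra|]]. intros u v Hv Hvu Hu.
      pose proof (Hnd v u Hv Hvu). pose proof (hg_pos v Hv). nra.
    - destruct (Hluc eps Heps) as [dl [Hdl H]]. exists (Rmin eps (dl/2)).
      split; [apply Rmin_pos; lra|split;[apply Rmin_l|]].
      intros u v Hv Hvu Hu. assert (Hu0 : 0 < u) by lra.
      pose proof (Rmin_r eps (dl/2)).
      assert (Hq : u = (u/v)*v) by (field; lra).
      assert (1 <= u/v) by nra.
      assert (u/v <= 1 + Rmin eps (dl/2)) by nra.
      assert (Habs : Rabs (u/v - 1) < dl) by (apply Rabs_def1; lra).
      specialize (H u v Hu0 Hv Habs). apply Rabs_def2 in H as [Ha Hb].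
      pose proof (hg_pos v Hv).
      assert (Hq2 : g u = (g u / g v) * g v) by (field; lra).
      nra. }
  destruct Hgam as [gamma [Hg0 [Hge Hcont]]].
  destruct (hf_wsm n gamma Hn Hg0) as [x0w [delta [Hx0w [Hdelta Hwsm]]]].
  set (d := delta / (2*(1+INR n)*(2+gamma))).
  assert (Hd : 0 < d) by (unfold d; apply Rdiv_lt_0_compat; [lra|]; apply Rmult_lt_0_compat; [|lra]; lra).
  set (E := fun k : nat => Rabs (f k - g (INR k)) >= eps * g (INR k)).
  destruct (hfg eps Heps d Hd) as [N0 HN0].
  exists gamma, (Rmax (Rmax x0w 1) (INR N0)).
  split; [lra|split;[lra|split]].
  { pose proof (Rmax_l (Rmax x0w 1) (INR N0)); pose proof (Rmax_r x0w 1); lra. }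
  intros x Hx.
  pose proof (Rmax_l (Rmax x0w 1) (INR N0)); pose proof (Rmax_r (Rmax x0w 1) (INR N0));
  pose proof (Rmax_r x0w 1); pose proof (Rmax_l x0w 1).
  assert (Hxw : x > x0w) by lra. assert (Hx1 : x > 1) by lra. assert (HxN : x > INR N0) by lra.
  destruct (Hwsm x Hxw) as [l [Hnd [Hl Hlen]]].
  assert (Hex : exists m, In m l /\ ~ E m /\ ~ E (n*m)%nat).
  { apply NNPP; intro Hno.
    assert (Hor : forall m, In m l -> E m \/ E (n*m)%nat).
    { intros m Hm. destruct (classic (E m)); [left; auto|right].
      apply NNPP; intro; apply Hno; exists m; auto. }
    destruct (split_list E (fun m => E (n*m)%nat) l Hnd Hor)
      as [l1 [l2 [S1 [S2 [S3 [S4 S5]]]]]].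
    destruct (nat_above ((1+gamma)*x)) as [N [HN1 HN2]]; [nra|].
    assert (HN0N : (N0 <= N)%nat) by (apply INR_le; nra).
    assert (Hc1 : INR (length l1) <= d * INR N).
    { apply (HN0 N HN0N l1 S1). intros m Hm. destruct (S3 m Hm) as [Hml HE].
      destruct (Hl m Hml) as [Hm1 [[Ha Hb] _]]. split; auto. split; auto.
      apply INR_le; lra. }
    assert (Hc2 : INR (length (map (Nat.mul n) l2)) <= d * INR (n*N)).
    { apply (HN0 (n*N)%nat); [nia| |].
      - apply Injective_map_NoDup_in; auto. intros a b _ _ Hab. nia.
      - intros k Hk. apply in_map_iff in Hk as [m [<- Hm]].
        destruct (S4 m Hm) as [Hml HE].
        destruct (Hl m Hml) as [Hm1 [[Ha Hb] _]].
        assert (m <= N)%nat by (apply INR_le; lra). split; auto. nia. }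
    rewrite length_map in Hc2. rewrite mult_INR in Hc2.
    apply le_INR in S5. rewrite plus_INR in S5.
    assert (Hk : d * (1 + INR n) * (2 + gamma) = delta / 2) by (unfold d; field; lra).
    assert (HK0 : 0 <= d * (1 + INR n)) by (apply Rmult_le_pos; lra).
    assert (d * (1 + INR n) * INR N <= d * (1 + INR n) * ((2+gamma) * x))
      by (apply Rmult_le_compat_l; nra).
    nra. }
  destruct Hex as [m [Hm [HEm HEnm]]].
  destruct (Hl m Hm) as [Hm1 [[Ha Hb] Hgood]].
  unfold E in HEm, HEnm. apply Rnot_ge_lt in HEm, HEnm.
  apply Rabs_def2 in HEm as [HEm1 HEm2]. apply Rabs_def2 in HEnm as [HEn1 HEn2].
  rewrite mult_INR in HEn1, HEn2.
  assert (Hmp : 0 < INR m) by lra.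
  assert (Hv : 0 < INR n * INR m) by nra.
  assert (Hc1 : g (INR n * (1+gamma) * x) >= (1-eps) * g (INR n * INR m)).
  { apply Hcont; auto.
    - assert (INR n * INR m <= INR n * ((1+gamma)*x)) by (apply Rmult_le_compat_l; lra).
      replace (INR n * (1+gamma) * x) with (INR n * ((1+gamma)*x)) by ring; lra.
    - assert (INR n * x <= INR n * INR m) by (apply Rmult_le_compat_l; lra).
      replace (INR n * (1+gamma) * x) with ((1+gamma) * (INR n * x)) by ring.
      apply Rmult_le_compat_l; lra. }
  assert (Hc2 : g (INR m) >= (1-eps) * g x) by (apply Hcont; lra).
  set (A := g (INR n * (1 + gamma) * x)) in *.
  set (B := g (INR n * INR m)) in *.
  set (C := g (INR m)) in *. set (D := g x) in *.
  set (F := f n) in *. set (fm := f m) in *. set (fnm := f (n * m)%nat) in *.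
  assert (HB : 0 < B) by (apply hg_pos; auto).
  assert (HC : 0 < C) by (apply hg_pos; auto).
  assert (HD : 0 < D) by (apply hg_pos; lra).
  assert (h1 : (1+eps) * B >= (1-gamma) * F * fm) by lra.
  assert (h2 : (1-gamma) * F * fm >= (1-gamma) * F * ((1-eps) * C)).
  { apply Rle_ge, Rmult_le_compat_l; [apply Rmult_le_pos|]; lra. }
  assert (h3 : (1-gamma) * F * ((1-eps) * C) >= (1-gamma) * F * ((1-eps)*((1-eps) * D))).
  { apply Rle_ge, Rmult_le_compat_l; [apply Rmult_le_pos|]; nra. }
  assert (HFD : 0 <= F * D) by (apply Rmult_le_pos; lra).
  assert (h4 : (1-gamma) * F * ((1-eps)*((1-eps) * D)) >= (1-eps)^3 * (F*D)).
  { replace ((1-gamma) * F * ((1-eps)*((1-eps) * D))) with ((1-gamma) * (1-eps)^2 * (F*D)) by ring.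
    apply Rle_ge, Rmult_le_compat_r; auto. nra. }
  assert (h5 : (1+eps) * A >= (1-eps)^4 * (F*D)).
  { assert ((1+eps) * A >= (1-eps) * ((1+eps) * B)) by nra.
    assert ((1-eps) * ((1+eps) * B) >= (1-eps) * ((1-eps)^3 * (F*D))) by
      (apply Rle_ge, Rmult_le_compat_l; lra).
    replace ((1-eps)^4) with ((1-eps)*(1-eps)^3) by ring. lra. }
  assert (h6 : (1-eps)^4 >= (1-5*eps)*(1+eps)) by nra.
  assert (h7 : (1-eps)^4 * (F*D) >= (1-5*eps)*(1+eps) * (F*D)) by
    (apply Rle_ge, Rmult_le_compat_r; lra).
  assert (h8 : (1+eps) * A >= (1+eps) * ((1-5*eps) * F * D)) by
    (replace ((1+eps) * ((1-5*eps) * F * D)) with ((1-5*eps)*(1+eps) * (F*D)) by ring; lra).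
  apply Rle_ge. apply Rmult_le_reg_l with (1+eps); lra.
Qed.
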